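(* Let $\boldsymbol u_1,\ldots,\boldsymbol u_p\in L^2(\Omega,\mathbb R^n)$. Define recursively $$\boldsymbol v_1=\boldsymbol u_1,\qquad \boldsymbol v_i=\boldsymbol u_i-\sum_{k=1}^{i-1}Z_{ik}\boldsymbol v_k\quad(i=2,\ldots,p),$$ where $$Z_{ik}=\mathbb E_{u_iv_k}\mathbb E_{v_kv_k}^{\dagger}+A_{ik}\big(I-\mathbb E_{v_kv_k}\mathbb E_{v_kv_k}^{\dagger}\big)$$ with arbitrary matrices $A_{ik}\in\mathbb R^{n\times n}$ (no invertibility of $\mathbb E_{v_kv_k}$ is assumed). Then $\boldsymbol v_1,\ldots,\boldsymbol v_p$ are pairwise orthogonal: $\mathbb E_{v_iv_j}=\mathbb O$ for all $i\neq j$.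
   Context: $(\Omega,\Sigma,\mu)$ is a probability space and $E[\cdot]$ denotes expectation. For random vectors $\boldsymbol g,\boldsymbol h$, $\mathbb E_{gh}:=E[\boldsymbol g\boldsymbol h^T]-E[\boldsymbol g]E[\boldsymbol h]^T$. $M^\dagger$ denotes the Moore–Penrose pseudo-inverse of a matrix $M$. Matrices act on random vectors pointwise in $\omega$. *)

(* Defs.v *)
From HB Require Import structures.
From mathcomp Require Import all_boot all_order all_algebra.
From mathcomp Require Import all_classical all_reals all_analysis.
Set Implicit Arguments. Unset Strict Implicit. Unset Printing Implicit Defensive.
Import Order.TTheory GRing.Theory Num.Theory.
Local Open Scope classical_set_scope.
Local Open Scope ring_scope.

Definition is_MP_inverse (R : realType) (m n : nat)
  (M : 'M[R]_(m, n)) (X : 'M[R]_(n, m)) : Prop :=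
  [/\ M *m X *m M = M, X *m M *m X = X,
      (M *m X)^T = M *m X & (X *m M)^T = X *m M].

Definition mp_pinv (R : realType) (m n : nat) (M : 'M[R]_(m, n)) : 'M[R]_(n, m) :=
  xget 0 [set X | is_MP_inverse M X].

Section Expect.
Context {d : measure_display} {T : measurableType d} {R : realType}
  (P : probability T R).

Definition Emx (a b : nat) (X : T -> 'M[R]_(a, b)) : 'M[R]_(a, b) :=
  \matrix_(i, j) fine (\int[P]_w (X w i j)%:E)%E.

Definition covmx (n m : nat) (g : T -> 'cV[R]_n) (h : T -> 'cV[R]_m)
  : 'M[R]_(n, m) :=
  Emx (fun w => g w *m (h w)^T) - Emx g *m (Emx h)^T.

Definition L2vec (n : nat) (g : T -> 'cV[R]_n) : Prop :=
  forall j : 'I_n, measurable_fun setT (fun w => g w j 0) /\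
    P.-integrable setT (fun w => ((g w j 0) ^+ 2)%:E).

End Expect.

(* Main.v *)
Require Import Defs.
From HB Require Import structures.
From mathcomp Require Import all_boot all_order all_algebra.
From mathcomp Require Import all_classical all_reals all_analysis.
From mathcomp Require Import ring lra.
Import Order.TTheory GRing.Theory Num.Theory.
Local Open Scope ring_scope.

Module Aux.
Set Implicit Arguments. Unset Strict Implicit. Unset Printing Implicit Defensive.
Section Scal.
Local Open Scope classical_set_scope.
Context {d : measure_display} {T : measurableType d} {R : realType}
  (P : probability T R).

Definition L2 (f : T -> R) : Prop :=
  measurable_fun setT f /\ P.-integrable setT (fun w => ((f w) ^+ 2)%:E).
Definition INT (f : T -> R) := P.-integrable setT (EFin \o f).
Definition EE (f : T -> R) : R := fine (\int[P]_w (f w)%:E)%E.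

Lemma L2_int_mul f g : L2 f -> L2 g -> INT (fun w => f w * g w).
Proof.
move=> [mf if2] [mg ig2].
apply: (@le_integrable _ _ _ P setT measurableT _ (fun w => (f w ^+ 2 + g w ^+ 2)%:E)).
- apply/measurable_realfun.measurable_EFinP; exact: measurable_realfun.measurable_funM.
- move=> w _ /=; rewrite lee_fin.
  rewrite [X in _ <= X]ger0_norm; last by rewrite addr_ge0 // sqr_ge0.
  rewrite normrM.
  have : 0 <= (`|f w| - `|g w|) ^+ 2 by rewrite sqr_ge0.
  rewrite -(real_normK (num_real (f w))) -(real_normK (num_real (g w))).
  nra.
- under eq_fun do rewrite EFinD. exact: integrableD.
Qed.

Lemma L2_cst c : L2 (fun _ => c).
Proof.
split; first exact: measurable_cst.
exact: (finite_measure_integrable_cst P (c ^+ 2) measurableT).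
Qed.

Lemma L2_int f : L2 f -> INT f.
Proof.
move=> Hf; have := L2_int_mul Hf (L2_cst 1).
by apply: eq_integrable => // w _; rewrite /= mulr1.
Qed.

Lemma L2_add f g : L2 f -> L2 g -> L2 (fun w => f w + g w).
Proof.
move=> Hf Hg; split; first exact: measurable_realfun.measurable_funD Hf.1 Hg.1.
have H := L2_int_mul Hf Hg.
apply: (eq_integrable _ (fun w => (f w ^+ 2)%:E + ((2 * (f w * g w))%:E + (g w ^+2)%:E)))%E => //.
  by move=> w _; rewrite -!EFinD; congr EFin; ring.
apply: integrableD => //; first exact Hf.2.
apply: integrableD => //; last exact Hg.2.
apply: (eq_integrable _ (fun w => (2%:E * (f w * g w)%:E)))%E => //.
exact: integrableZl.
Qed.

Lemma L2_scale c f : L2 f -> L2 (fun w => c * f w).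
Proof.
move=> Hf; split; first exact: measurable_realfun.measurable_funM (measurable_cst _) Hf.1.
apply: (eq_integrable _ (fun w => (c ^+ 2)%:E * (f w ^+ 2)%:E))%E => //.
  by move=> w _; rewrite -EFinM exprMn.
exact: integrableZl Hf.2.
Qed.

Lemma L2_opp f : L2 f -> L2 (fun w => - f w).
Proof.
move=> Hf; have := L2_scale (-1) Hf.
by rewrite (_ : (fun w => -1 * f w) = fun w => - f w) //; apply/funext => w; rewrite mulN1r.
Qed.

Lemma L2_sub f g : L2 f -> L2 g -> L2 (fun w => f w - g w).
Proof. move=> Hf Hg; exact: L2_add Hf (L2_opp Hg). Qed.

Lemma L2_sum (I : Type) (s : seq I) (F : I -> T -> R) :
  (forall i, L2 (F i)) -> L2 (fun w => \sum_(i <- s) F i w).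
Proof.
move=> HF; elim: s => [|a s IH].
  by under eq_fun do rewrite big_nil; exact: L2_cst.
under eq_fun do rewrite big_cons; exact: L2_add.
Qed.

Lemma EE_add f g : INT f -> INT g -> EE (fun w => f w + g w) = EE f + EE g.
Proof. move=> If Ig; exact: (RintegralD measurableT If Ig). Qed.

Lemma EE_scale c f : INT f -> EE (fun w => c * f w) = c * EE f.
Proof. move=> If; exact: (@RintegralZl _ _ _ P setT f c measurableT If). Qed.

Lemma EE_cst c : EE (fun _ => c) = c.
Proof.
have := Rintegral_cst P measurableT c; rewrite /Rintegral /EE => ->.
apply: (@eq_trans _ _ (c * 1)); last by rewrite mulr1. congr (_ * _). exact: (f_equal fine (probability_setT P)).
Qed.
Lemma EE_sq_ge0 f : 0 <= EE (fun w => f w ^+ 2).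
Proof. apply: fine_ge0; apply: integral_ge0 => w _; by rewrite lee_fin sqr_ge0. Qed.

Definition cov (f g : T -> R) := EE (fun w => f w * g w) - EE f * EE g.

Lemma covC f g : cov f g = cov g f.
Proof. by rewrite /cov mulrC; congr (EE _ - _); apply/funext => w; rewrite mulrC. Qed.

Lemma covD f1 f2 g : L2 f1 -> L2 f2 -> L2 g ->
  cov (fun w => f1 w + f2 w) g = cov f1 g + cov f2 g.
Proof.
move=> H1 H2 Hg; rewrite /cov.
rewrite (_ : (fun w => (f1 w + f2 w) * g w) = fun w => f1 w * g w + f2 w * g w);
  last by apply/funext => w; rewrite mulrDl.
rewrite !EE_add; try exact: L2_int_mul; try exact: L2_int.
ring.
Qed.

Lemma covZ c f g : L2 f -> L2 g -> cov (fun w => c * f w) g = c * cov f g.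
Proof.
move=> Hf Hg; rewrite /cov.
rewrite (_ : (fun w => (c * f w) * g w) = fun w => c * (f w * g w));
  last by apply/funext => w; rewrite mulrA.
rewrite !EE_scale; try exact: L2_int_mul; try exact: L2_int.
ring.
Qed.

Lemma cov0 g : cov (fun _ => 0) g = 0.
Proof.
rewrite /cov (_ : (fun w => 0 * g w) = fun _ => 0); last by apply/funext => w; rewrite mul0r.
by rewrite EE_cst mul0r subrr.
Qed.

Lemma cov_sum (I : Type) (s : seq I) (F : I -> T -> R) g :
  (forall i, L2 (F i)) -> L2 g ->
  cov (fun w => \sum_(i <- s) F i w) g = \sum_(i <- s) cov (F i) g.
Proof.
move=> HF Hg; elim: s => [|a s IH].
  rewrite big_nil; under eq_fun do rewrite big_nil; exact: cov0.
rewrite big_cons -IH.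
under eq_fun do rewrite big_cons.
apply: covD => //; exact: L2_sum.
Qed.

Lemma cov_ge0 f : L2 f -> 0 <= cov f f.
Proof.
move=> Hf; set c := EE f.
have H := EE_sq_ge0 (fun w => f w - c).
have Hc := L2_cst (- c).
suff <- : EE (fun w => (f w - c) ^+ 2) = cov f f by [].
rewrite (_ : (fun w => (f w - c) ^+ 2) = fun w => f w * f w + ((-(2 * c)) * f w + c ^+ 2));
  last by apply/funext => w; ring.
rewrite EE_add; last first.
- apply: L2_int; apply: L2_add; [exact: L2_scale|exact: L2_cst].
- exact: L2_int_mul.
rewrite EE_add; [|apply: L2_int; exact: L2_scale|exact: L2_int (L2_cst _)].
rewrite EE_scale; last exact: L2_int.
rewrite EE_cst /cov -/c; ring.
Qed.

Lemma cov_degen f g : L2 f -> L2 g -> cov g g = 0 -> cov f g = 0.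
Proof.
move=> Hf Hg H0; apply/eqP/negPn/negP => Hne.
set a := cov f f; set b := cov f g.
pose t := - (a + 1) / (2 * b).
pose h := fun w => f w + t * g w.
have Hh : L2 h by exact: L2_add Hf (L2_scale t Hg).
have Htg : L2 (fun w => t * g w) by exact: L2_scale.
have E1 : cov h h = a + 2 * t * b.
  rewrite {1}/h covD // covZ // [cov f h]covC [cov g h]covC /h.
  rewrite !covD // !covZ // H0 [cov g f]covC -/a -/b; ring.
have Ht := cov_ge0 Hh; rewrite E1 in Ht.
have H2b : 2 * b != 0 by rewrite mulf_neq0.
have : 2 * t * b = - (a + 1).
  rewrite /t; field; done.
have Ha := cov_ge0 Hf; rewrite -/a in Ha.
lra.
Qed.

End Scal.

Section Mx.
Local Open Scope classical_set_scope.
Context {d : measure_display} {T : measurableType d} {R : realType}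
  (P : probability T R).

Definition L2v n (x : T -> 'cV[R]_n) := forall r, L2 P (fun w => x w r 0).

Lemma covmxE n m (x : T -> 'cV[R]_n) (y : T -> 'cV[R]_m) r s :
  covmx P x y r s = cov P (fun w => x w r 0) (fun w => y w s 0).
Proof.
rewrite /covmx /cov /Emx !mxE big_ord1 ?mxE.
congr (_ - _); congr fine; apply: eq_integral => w _.
by rewrite !mxE big_ord1 !mxE.
Qed.

Lemma covB f g h : L2 P f -> L2 P g -> L2 P h ->
  cov P (fun w => f w - g w) h = cov P f h - cov P g h.
Proof.
move=> Hf Hg Hh.
rewrite (_ : (fun w => f w - g w) = fun w => f w + (-1) * g w);
  last by apply/funext => w; rewrite mulN1r.
rewrite covD //; last exact: L2_scale.
by rewrite covZ // mulN1r.
Qed.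

Lemma covR_lin (I : Type) (s : seq I) (c : I -> R) (g : I -> T -> R) f :
  (forall i, L2 P (g i)) -> L2 P f ->
  cov P f (fun w => \sum_(i <- s) c i * g i w) = \sum_(i <- s) c i * cov P f (g i).
Proof.
move=> Hg Hf; rewrite covC cov_sum //; last by move=> i; exact: L2_scale.
by apply: eq_bigr => i _; rewrite covZ // covC.
Qed.

Lemma covL_lin (I : Type) (s : seq I) (c : I -> R) (g : I -> T -> R) f :
  (forall i, L2 P (g i)) -> L2 P f ->
  cov P (fun w => \sum_(i <- s) c i * g i w) f = \sum_(i <- s) c i * cov P (g i) f.
Proof.
move=> Hg Hf; rewrite covC covR_lin //.
by apply: eq_bigr => i _; rewrite covC.
Qed.

Lemma L2v_mul n m (M : 'M[R]_(m, n)) (x : T -> 'cV[R]_n) :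
  L2v x -> L2v (fun w => M *m x w).
Proof.
move=> Hx r; rewrite /L2v.
under eq_fun do rewrite mxE.
apply: L2_sum => l; exact: L2_scale.
Qed.

Lemma covmx_kernel n m k (x : T -> 'cV[R]_n) (y : T -> 'cV[R]_m)
  (B : 'M[R]_(m, k)) :
  L2v x -> L2v y -> covmx P y y *m B = 0 -> covmx P x y *m B = 0.
Proof.
move=> Hx Hy HB; apply/matrixP => r s; rewrite !mxE.
pose z := fun w => \sum_(l < m) B l s * y w l 0.
have Hz : L2 P z by apply: L2_sum => l; exact: L2_scale.
have Hzz : cov P z z = 0.
  rewrite /z covL_lin //.
  rewrite big1 // => l _.
  rewrite covR_lin //.
  have := HB; move/matrixP => /(_ l s); rewrite !mxE => HBl.
  rewrite (eq_bigr (fun j => covmx P y y l j * B j s)); first by rewrite HBl mulr0.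
  by move=> j _; rewrite covmxE mulrC.
have := cov_degen (Hx r) Hz Hzz.
rewrite /z covR_lin // => H; rewrite -[RHS]H.
by apply: eq_bigr => l _; rewrite covmxE mulrC.
Qed.

Lemma covmx_tr n m (x : T -> 'cV[R]_n) (y : T -> 'cV[R]_m) :
  covmx P x y = (covmx P y x)^T.
Proof. by apply/matrixP => r s; rewrite covmxE [RHS]mxE covmxE covC. Qed.

Lemma covmx_lin n m (i : nat) (x a : T -> 'cV[R]_n) (b : nat -> T -> 'cV[R]_n)
  (M : nat -> 'M[R]_n) (y : T -> 'cV[R]_m) :
  L2v a -> (forall k, (k < i)%N -> L2v (b k)) -> L2v y ->
  (forall w, x w = a w - \sum_(k < i) (M k *m b k w)) ->
  covmx P x y = covmx P a y - \sum_(k < i) (M k *m covmx P (b k) y).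
Proof.
move=> Ha Hb Hy Hx; apply/matrixP => r s.
rewrite [LHS]covmxE [RHS]mxE [X in _ + X]mxE summxE.
have Hb' : forall k : 'I_i, L2v (b k) by move=> k; exact: Hb.
rewrite (_ : (fun w => x w r 0) = fun w => a w r 0 -
   \sum_(k < i) \sum_(l < n) M k r l * b k w l 0); last first.
  apply/funext => w; rewrite Hx !mxE summxE; congr (_ - _).
  by apply: eq_bigr => k _; rewrite mxE.
rewrite covB //; last first.
  apply: L2_sum => k; apply: L2_sum => l; exact: (L2_scale _ (Hb' k l)).
rewrite covmxE cov_sum //; last first.
  by move=> k; apply: L2_sum => l; exact: (L2_scale _ (Hb' k l)).
congr (_ - _); apply: eq_bigr => k _.
rewrite (covL_lin _ _ (fun l => Hb' k l) (Hy s)) mxE; apply: eq_bigr => l _; by rewrite covmxE.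
Qed.

End Mx.

Section MP.
Variable R : realType.

Lemma gram0 a b (X : 'M[R]_(a, b)) : X *m X^T = 0 -> X = 0.
Proof.
move=> H; apply/matrixP => i j; rewrite mxE.
have /matrixP /(_ i i) := H; rewrite !mxE => /eqP.
rewrite psumr_eq0; last by move=> k _; rewrite mxE -expr2 sqr_ge0.
move/allP => /(_ j (mem_index_enum _)); rewrite mxE /= -expr2 sqrf_eq0.
by move/eqP.
Qed.

Lemma gram_unit r n (C : 'M[R]_(r, n)) : row_free C -> C *m C^T \in unitmx.
Proof.
move=> fC; rewrite -row_free_unit -kermx_eq0; apply/eqP.
set K := kermx _.
have HK : K *m (C *m C^T) = 0 by apply/sub_kermxP.
have : K *m C = 0.
  apply: gram0; rewrite trmx_mul mulmxA -(mulmxA K) HK.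
  by rewrite mul0mx.
by move/eqP; rewrite mulmx_free_eq0 // => /eqP.
Qed.

Lemma mp_fact m n r (B : 'M[R]_(m, r)) (C : 'M[R]_(r, n)) :
  row_free B^T -> row_free C -> exists X, is_MP_inverse (B *m C) X.
Proof.
move=> fB fC.
set G1 := C *m C^T; set G2 := B^T *m B.
have u1 : G1 \in unitmx by exact: gram_unit.
have u2 : G2 \in unitmx by have := gram_unit fB; rewrite trmxK.
have s1 : (invmx G1)^T = invmx G1 by rewrite trmx_inv /G1 trmx_mul trmxK.
have s2 : (invmx G2)^T = invmx G2 by rewrite trmx_inv /G2 trmx_mul trmxK.
exists (C^T *m invmx G1 *m invmx G2 *m B^T).
have MX : B *m C *m (C^T *m invmx G1 *m invmx G2 *m B^T) = B *m invmx G2 *m B^T.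
  rewrite !mulmxA -(mulmxA B C) -/G1 -(mulmxA B G1) mulmxV // mulmx1.
  done.
have XM : C^T *m invmx G1 *m invmx G2 *m B^T *m (B *m C) = C^T *m invmx G1 *m C.
  rewrite !mulmxA -(mulmxA _ B^T B) -/G2 -(mulmxA _ (invmx G2)) mulVmx //.
  by rewrite mulmx1.
split.
- rewrite MX -!mulmxA (mulmxA B^T) -/G2 mulKmx //.
- rewrite !mulmxA -(mulmxA _ B^T B) -/G2 -(mulmxA _ (invmx G2) G2) mulVmx // mulmx1.
  by rewrite -(mulmxA _ C C^T) -/G1 -(mulmxA _ (invmx G1) G1) mulVmx // mulmx1.
- by rewrite MX !trmx_mul trmxK s2 mulmxA.
- by rewrite XM !trmx_mul trmxK s1 mulmxA.
Qed.

Lemma mp_exists m n (M : 'M[R]_(m, n)) : exists X, is_MP_inverse M X.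
Proof.
have fC := row_base_free M.
have fB : row_free (col_base M)^T.
  by rewrite /row_free mxrank_tr; have := col_base_full M.
by have := mp_fact fB fC; rewrite mulmx_base.
Qed.

Lemma mp_pinvP m n (M : 'M[R]_(m, n)) : is_MP_inverse M (mp_pinv M).
Proof. exact: (xgetPex 0 (mp_exists M)). Qed.

End MP.

Lemma L2v_lin (d : measure_display) (T : measurableType d) (R : realType)
  (P : probability T R) n (i : nat) (x a : T -> 'cV[R]_n) (b : nat -> T -> 'cV[R]_n)
  (M : nat -> 'M[R]_n) :
  L2v P a -> (forall k, (k < i)%N -> L2v P (b k)) ->
  (forall w, x w = a w - \sum_(k < i) (M k *m b k w)) -> L2v P x.
Proof.
move=> Ha Hb Hx r.
rewrite (_ : (fun w => x w r 0) = fun w => a w r 0 -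
   \sum_(k < i) (M k *m b k w) r 0); last first.
  by apply/funext => w; rewrite Hx !mxE summxE.
apply: L2_sub => //; apply: L2_sum => k.
exact: (L2v_mul (M k) (Hb k (ltn_ord k))).
Qed.

End Aux.
Import Aux.

Theorem lemma3 (d : measure_display) (T : measurableType d) (R : realType)
  (P : probability T R) (n p : nat)
  (u v : nat -> T -> 'cV[R]_n) (A : nat -> nat -> 'M[R]_n) :
  (forall i, (i < p)%N -> L2vec P (u i)) ->
  (forall i, (i < p)%N -> forall w,
     v i w = u i w - \sum_(k < i)
       ((covmx P (u i) (v k) *m mp_pinv (covmx P (v k) (v k))
         + A i k *m (1%:M - covmx P (v k) (v k) *m mp_pinv (covmx P (v k) (v k))))
        *m v k w)) ->
  forall i j, (i < p)%N -> (j < p)%N -> i <> j -> covmx P (v i) (v j) = 0.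
Proof.
move=> Hu Hv.
have Hu' : forall i, (i < p)%N -> L2v P (u i) by move=> i Hi r; exact: (Hu i Hi r).
pose Z i k := covmx P (u i) (v k) *m mp_pinv (covmx P (v k) (v k))
         + A i k *m (1%:M - covmx P (v k) (v k) *m mp_pinv (covmx P (v k) (v k))).
have HL : forall i, (i < p)%N -> L2v P (v i).
  move=> i; elim/ltn_ind: i => i IH Hi.
  apply: (@L2v_lin _ _ _ P n i (v i) (u i) v (Z i)); first exact: Hu'.
    by move=> k Hk; apply: IH => //; exact: ltn_trans Hi.
  exact: Hv.
have Hlt : forall i, (i < p)%N -> forall j, (j < i)%N -> covmx P (v i) (v j) = 0.
  move=> i; elim/ltn_ind: i => i IH Hi j Hj.
  have Hjp : (j < p)%N by exact: ltn_trans Hi.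
  rewrite (@covmx_lin _ _ _ P n n i (v i) (u i) v (Z i) (v j)); first last.
  - exact: Hv.
  - exact: HL.
  - by move=> k Hk; apply: HL; exact: ltn_trans Hi.
  - exact: Hu'.
  rewrite (bigD1 (Ordinal Hj)) //= big1 ?addr0; last first.
    move=> k /eqP Hk.
    have Hk' : nat_of_ord k <> j by move=> E; apply: Hk; apply: val_inj.
    have Hkp : (k < p)%N by exact: ltn_trans (ltn_ord k) Hi.
    case: (ltngtP k j) => Hkj.
    - rewrite covmx_tr (IH j Hj Hjp k Hkj). by rewrite trmx0 mulmx0.
    - by rewrite (IH k (ltn_ord k) Hkp j Hkj) mulmx0.
    - by case: Hk'.
  set cv := covmx P (v j) (v j).
  have [H1 _ _ _] := mp_pinvP cv.
  have E2 : (1%:M - cv *m mp_pinv cv) *m cv = 0.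
    by rewrite mulmxBl mul1mx H1 subrr.
  rewrite /Z -/cv mulmxDl -!mulmxA E2 mulmx0 addr0.
  have K : covmx P (u i) (v j) *m (1%:M - mp_pinv cv *m cv) = 0.
    apply: covmx_kernel; [exact: Hu'|exact: HL|].
    by rewrite mulmxBr mulmx1 mulmxA H1 subrr.
  by move: K; rewrite [X in X = _ -> _]mulmxBr mulmx1.
move=> i j Hi Hj Hij.
case: (ltngtP i j) => H.
- by rewrite covmx_tr (Hlt j Hj i H) trmx0.
- exact: Hlt.
- by case: Hij.
Qed.
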